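(* Let $\Gamma=(V,E)$ be a reflexive locally finite $k$-separable graph and let $X$ and $Y$ be $k$-fragments of $\Gamma$. Then $\partial^-(\nabla(X))=\partial(X)$, $\nabla^-(\nabla(X))=X$, and $X\subseteq Y$ if and only if $\nabla(Y)\subseteq\nabla(X)$. In particular, $\nabla(X)$ is a reverse-$k$-semi-fragment of $\Gamma$.
   Context: A graph is a pair $\Gamma=(V,E)$ with $E\subseteq V\times V$. For $x\in V$, $\Gamma(x)=\{y:(x,y)\in E\}$, and $\Gamma(X)=\bigcup_{x\in X}\Gamma(x)$. The reverse graph is $\Gamma^-=(V,E^-)$ with $E^-=\{(x,y):(y,x)\in E\}$. $\Gamma$ is reflexive if $(x,x)\in E$ for all $x$, locally finite if $\Gamma(x),\Gamma^-(x)$ are finite for all $x$. $\partial(X)=\Gamma(X)\setminus X$, $\nabla(X)=V\setminus\Gamma(X)$, and $\partial^-,\nabla^-$ are the same operators for $\Gamma^-$. $\Gamma$ is $k$-separable if there is a finite $X$ with $|X|\ge k$ and $|\nabla(X)|\ge k$; then $\kappa_k(\Gamma)=\min\{|\partial(X)|: X\text{ finite}, |X|\ge k, |\nabla(X)|\ge k\}$. A $k$-fragment is a finite $X$ with $|X|\ge k$, $|\nabla(X)|\ge k$, $|\partial(X)|=\kappa_k(\Gamma)$. A reverse $k$-fragment is a $k$-fragment of $\Gamma^-$. A $k$-semi-fragment of $\Gamma$ is a set $X$ that is either a $k$-fragment of $\Gamma$ or such that $\nabla(X)$ is a $k$-fragment of $\Gamma^-$; a reverse-$k$-semi-fragment of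 $\Gamma$ is a $k$-semi-fragment of $\Gamma^-$. *)

(* Defs.v *)
From Stdlib Require Import List Arith.
Import ListNotations.

Definition vset (V : Type) := V -> Prop.

Section Graphs.
Context {V : Type}.

Definition set_eq (A B : vset V) : Prop := forall x, A x <-> B x.
Definition subset (A B : vset V) : Prop := forall x, A x -> B x.

Definition finite (A : vset V) : Prop := exists l : list V, forall x, A x <-> In x l.
Definition card_eq (A : vset V) (n : nat) : Prop :=
  exists l : list V, NoDup l /\ length l = n /\ forall x, A x <-> In x l.
(* |A| >= k  (A possibly infinite) *)
Definition card_ge (A : vset V) (k : nat) : Prop :=
  exists l : list V, NoDup l /\ length l = k /\ forall x, In x l -> A x.

Variable E : V -> V -> Prop.

Definition image (X : vset V) : vset V := fun y => exists x, X x /\ E x y.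
Definition bdry (X : vset V) : vset V := fun y => image X y /\ ~ X y.
Definition nabla (X : vset V) : vset V := fun y => ~ image X y.

Definition reflexive : Prop := forall x, E x x.
Definition locally_finite : Prop :=
  forall x, finite (fun y => E x y) /\ finite (fun y => E y x).

Definition admissible (k : nat) (X : vset V) : Prop :=
  finite X /\ card_ge X k /\ card_ge (nabla X) k.

Definition separable (k : nat) : Prop := exists X, admissible k X.

Definition is_kappa (k n : nat) : Prop :=
  (exists X, admissible k X /\ card_eq (bdry X) n) /\
  (forall X m, admissible k X -> card_eq (bdry X) m -> n <= m).

Definition fragment (k : nat) (X : vset V) : Prop :=
  admissible k X /\ exists n, is_kappa k n /\ card_eq (bdry X) n.

End Graphs.

Definition rev {V : Type} (E : V -> V -> Prop) : V -> V -> Prop := fun x y => E y x.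

Definition semi_fragment {V : Type} (E : V -> V -> Prop) (k : nat) (X : vset V) : Prop :=
  fragment E k X \/ fragment (rev E) k (nabla E X).

Definition rev_semi_fragment {V : Type} (E : V -> V -> Prop) (k : nat) (X : vset V) : Prop :=
  semi_fragment (rev E) k X.

(* Main.v *)
Require Import Defs.
From Stdlib Require Import Arith Lia Classical FunctionalExtensionality PropExtensionality.
From Stdlib Require List.
Import List (In, NoDup, in_split, NoDup_remove_1, NoDup_remove_2, in_app_iff, length_app).
Open Scope list_scope.

Lemma key (V : Type) (E : V -> V -> Prop) (k : nat) (X : vset V) (y : V) :
  fragment E k X -> bdry E X y -> exists z, nabla E X z /\ E y z.
Proof.
  intros [[[lX HlX] [Hge1 Hge2]] [n [[_ Hmin] [lb [Hnd [Hlen Hlb]]]]]] Hy.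
  apply NNPP; intro Hno.
  assert (Hsub : forall z, E y z -> image E X z).
  { intros z Hz. apply NNPP; intro Hn. apply Hno. exists z. split; assumption. }
  set (X' := fun x => X x \/ x = y).
  assert (HimX : forall z, image E X' z -> image E X z).
  { intros z [x [[Hx|Hx] Hxz]]. exists x; auto. subst x. auto. }
  assert (Hyl : In y lb) by (apply Hlb; exact Hy).
  destruct (in_split _ _ Hyl) as [l1 [l2 Heq]]. subst lb.
  assert (Hnd' : NoDup (l1 ++ l2)) by (eapply NoDup_remove_1; eauto).
  assert (Hny : ~ In y (l1 ++ l2)) by (eapply NoDup_remove_2; eauto).
  assert (Hadm : admissible E k X').
  { split; [|split].
    - exists (y :: lX). intro x. simpl. unfold X'. rewrite HlX. intuition.
    - destruct Hge1 as [l [? [? Hl]]]. exists l. repeat split; auto.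
      intros x Hx. left. auto.
    - destruct Hge2 as [l [? [? Hl]]]. exists l. split; [auto|split; [auto|]].
      intros x Hx Himg. apply (Hl x Hx). apply HimX. exact Himg. }
  assert (Hc : card_eq (bdry E X') (length (l1 ++ l2))).
  { exists (l1 ++ l2). split; [auto|split; [auto|]]. intro z. split.
    - intros [Hi Hn']. assert (Hb : bdry E X z).
      { split. apply HimX; auto. intro; apply Hn'; left; auto. }
      apply Hlb in Hb. apply in_app_iff in Hb. simpl in Hb.
      apply in_app_iff. destruct Hb as [?|[?|?]]; auto.
      subst z. exfalso. apply Hn'. right. reflexivity.
    - intro Hz. assert (Hzy : z <> y) by (intro; subst; contradiction).
      assert (Hb : bdry E X z).
      { apply Hlb. apply in_app_iff. apply in_app_iff in Hz. simpl. tauto. }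
      destruct Hb as [[x [Hx Hxz]] Hnz]. split.
      + exists x. split; [left; auto | auto].
      + intros [?|?]; contradiction. }
  specialize (Hmin _ _ Hadm Hc).
  rewrite length_app in Hlen, Hmin. simpl in Hlen. lia.
Qed.

Theorem lemma3p2 (V : Type) (E : V -> V -> Prop) (k : nat)
  (Hrefl : reflexive E) (Hlf : locally_finite E) (Hsep : separable E k)
  (X Y : vset V) (HX : fragment E k X) (HY : fragment E k Y) :
  set_eq (bdry (rev E) (nabla E X)) (bdry E X) /\
  set_eq (nabla (rev E) (nabla E X)) X /\
  (subset X Y <-> subset (nabla E Y) (nabla E X)) /\
  rev_semi_fragment E k (nabla E X).
Proof.
  assert (P2 : forall X, fragment E k X -> set_eq (nabla (rev E) (nabla E X)) X).
  { intros W HW y. split.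
    - intro Hy. apply NNPP; intro Hn.
      assert (Hb : bdry E W y).
      { split; auto. apply NNPP; intro Hi. apply Hy. exists y. split.
        exact Hi. apply Hrefl. }
      destruct (key _ _ _ _ _ HW Hb) as [z [Hz Hyz]].
      apply Hy. exists z. split; auto.
    - intros Hy [z [Hz Hyz]]. apply Hz. exists y. split; auto. }
  split; [|split; [|split]].
  - intro y. split.
    + intros [[z [Hz Hyz]] Hny]. split.
      * apply NNPP; exact Hny.
      * intro Hy. apply Hz. exists y. split; auto.
    + intro Hb. split.
      * destruct (key _ _ _ _ _ HX Hb) as [z [Hz Hyz]]. exists z. split; auto.
      * intro Hn. apply Hn. destruct Hb; auto.
  - apply P2; auto.
  - split.
    + intros Hs z Hz [x [Hx Hxz]]. apply Hz. exists x. split; auto.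
    + intros Hs x Hx. apply (P2 Y HY). intros [z [Hz Hxz]].
      apply (Hs z Hz). exists x. split; auto.
  - unfold rev_semi_fragment, semi_fragment. right.
    assert (Heq : nabla (rev E) (nabla E X) = X).
    { apply functional_extensionality. intro y.
      apply propositional_extensionality. exact (P2 X HX y). }
    change (fragment E k (nabla (rev E) (nabla E X))).
    rewrite Heq. exact HX.
Qed.
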